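(* Let $m\ge 2$, $1\le\ell<m$, and let $\mathcal{R}$ be the positional scoring rule with scoring function $\lambda(i)=\alpha_i$, where $\alpha_1\ge\alpha_2\ge\dots\ge\alpha_m=0$ and $\alpha_1>0$. Then the optimal truncated-ballot algorithm (described in the context) is, for $\ell$-truncated elections, an approximation algorithm for $\mathcal{R}$ with approximation ratio $$\frac{\sum_{i=1}^{\ell}\alpha_i}{m\,\alpha_{\ell+1}+\frac{\alpha_1-\alpha_{\ell+1}}{\alpha_1}\sum_{i=1}^{\ell}\alpha_i};$$ that is, for every election $E$ (with full rankings), if $w$ is the candidate returned by the algorithm on the $\ell$-truncation of $E$, then $\mathrm{sc}_\lambda(w)/\max_{c\in C}\mathrm{sc}_\lambda(c)$ is at least this quantity.
   Context: An election consists of a set $V$ of $n$ voters and a set $C$ of $m$ candidates; each voter $v$ has a strict linear order over $C$, and $\mathrm{pos}_v(c)$ is the position of $c$ (1 = top). The $\lambda$-score is $\mathrm{sc}_\lambda(c)=\sum_{v}\lambda(\mathrm{pos}_v(c))$. The $\ell$-truncation of $E$ reveals, for each voter, only her top $\ell$ candidates in order. Let $\mathrm{occ}(c)$ be the number of voters ranking $c$ among their top $\ell$, and $T(c)=\sum_{v:\,\mathrm{pos}_v(c)\le\ell}\alpha_{\mathrm{pos}_v(c)}$. Define $\mathrm{worst}(c)=T(c)+(n-\mathrm{occ}(c))\alpha_m$ (score when $c$ is placed last by every voter not ranking it in the top $\ell$) and $\mathrm{best}(c)=T(c)+(n-\mathrm{occ}(c))\alpha_{\ell+1}$ (score when $c$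 is placed at position $\ell+1$ by every such voter). Optimal truncated-ballot algorithm: let $a$ be a candidate with highest $\mathrm{worst}$ score, $b_1$ a candidate with highest $\mathrm{best}$ score and $b_2$ a candidate with the highest $\mathrm{best}$ score among $C\setminus\{b_1\}$; return $a$ if $\mathrm{worst}(a)/\mathrm{best}(b_1)\ge\mathrm{worst}(b_1)/\mathrm{best}(b_2)$, and $b_1$ otherwise. *)

(* Defs.v *)
From HB Require Import structures.
From mathcomp Require Import all_boot all_order all_algebra all_fingroup.
Set Implicit Arguments. Unset Strict Implicit. Unset Printing Implicit Defensive.
Import Order.TTheory GRing.Theory Num.Theory.
Local Open Scope ring_scope.

(* An election with n voters ('I_n) and m candidates ('I_m): voter v's strict
   linear order is the bijection (E v) : 'I_m -> 'I_m sending a candidate to its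
   0-based rank; pos E v c is the 1-based position (1 = top).
   The scoring vector alpha : nat -> R is indexed 1..m (alpha i = alpha_i). *)

Definition pos (n m : nat) (E : 'I_n -> {perm 'I_m}) (v : 'I_n) (c : 'I_m) : nat :=
  (E v c : nat).+1.

Definition score {R : realFieldType} (n m : nat) (alpha : nat -> R)
  (E : 'I_n -> {perm 'I_m}) (c : 'I_m) : R :=
  \sum_(v : 'I_n) alpha (pos E v c).

(* maximum score over all candidates (scores are nonnegative) *)
Definition max_score {R : realFieldType} (n m : nat) (alpha : nat -> R)
  (E : 'I_n -> {perm 'I_m}) : R :=
  \big[Num.max/0]_(c : 'I_m) score alpha E c.

(* data visible in the l-truncation *)
Definition occ (n m : nat) (l : nat) (E : 'I_n -> {perm 'I_m}) (c : 'I_m) : nat :=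
  #|[set v : 'I_n | (pos E v c <= l)%N]|.

Definition Tsc {R : realFieldType} (n m : nat) (alpha : nat -> R) (l : nat)
  (E : 'I_n -> {perm 'I_m}) (c : 'I_m) : R :=
  \sum_(v : 'I_n | (pos E v c <= l)%N) alpha (pos E v c).

Definition worst {R : realFieldType} (n m : nat) (alpha : nat -> R) (l : nat)
  (E : 'I_n -> {perm 'I_m}) (c : 'I_m) : R :=
  Tsc alpha l E c + (n - occ l E c)%:R * alpha m.

Definition best {R : realFieldType} (n m : nat) (alpha : nat -> R) (l : nat)
  (E : 'I_n -> {perm 'I_m}) (c : 'I_m) : R :=
  Tsc alpha l E c + (n - occ l E c)%:R * alpha l.+1.

(* w is a possible output of the optimal truncated-ballot algorithm
   (for any tie-breaking in the choice of a, b1, b2). *)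
Definition alg_output {R : realFieldType} (n m : nat) (alpha : nat -> R) (l : nat)
  (E : 'I_n -> {perm 'I_m}) (w : 'I_m) : Prop :=
  exists a b1 b2 : 'I_m,
    (forall c, worst alpha l E c <= worst alpha l E a) /\
    (forall c, best alpha l E c <= best alpha l E b1) /\
    b2 != b1 /\
    (forall c, c != b1 -> best alpha l E c <= best alpha l E b2) /\
    w = (if worst alpha l E b1 / best alpha l E b2
            <= worst alpha l E a / best alpha l E b1
         then a else b1).

Definition approx_ratio {R : realFieldType} (m : nat) (alpha : nat -> R) (l : nat) : R :=
  (\sum_(1 <= i < l.+1) alpha i) /
  (m%:R * alpha l.+1 + (alpha 1%N - alpha l.+1) / alpha 1%N * \sum_(1 <= i < l.+1) alpha i).

(* Main.v *)
Set Warnings "-notation-overridden,-ambiguous-paths".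
Require Import Defs.
From HB Require Import structures.
From mathcomp Require Import all_boot all_order all_algebra all_fingroup.
From mathcomp Require Import ring lra zify.
Import Order.TTheory GRing.Theory Num.Theory.
Local Open Scope ring_scope.

Lemma bigmax_seq_ge (R : realFieldType) (I : eqType) (F : I -> R) (s : seq I) c :
  c \in s -> F c <= \big[Num.max/0]_(i <- s) F i.
Proof.
elim: s => [//|x s IH]; rewrite inE big_cons => /orP [/eqP->|/IH H].
  by rewrite le_max lexx.
by rewrite le_max H orbT.
Qed.

Lemma bigmax_seq_att (R : realFieldType) (I : eqType) (F : I -> R) (s : seq I) :
  \big[Num.max/0]_(i <- s) F i = 0 \/ exists2 c, c \in s & \big[Num.max/0]_(i <- s) F i = F c.
Proof.
elim: s => [|x s IH]; first by left; rewrite big_nil.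
rewrite big_cons; have [H|H] := orP (le_total (F x) (\big[Num.max/0]_(i <- s) F i)).
  rewrite (max_r H); case: IH => [->|[c cs ->]]; [by left| right; exists c => //].
  by rewrite inE cs orbT.
by rewrite (max_l H); right; exists x => //; rewrite inE eqxx.
Qed.

Lemma alpha_mono (R : realFieldType) m (alpha : nat -> R)
  (Hmono : forall i : nat, (1 <= i)%N -> (i < m)%N -> alpha i.+1 <= alpha i) k :
  forall i, (1 <= i)%N -> (i + k <= m)%N -> alpha (i + k)%N <= alpha i.
Proof.
elim: k => [|k IH] i H1 H2; first by rewrite addn0.
apply: le_trans (IH i H1 _); last by rewrite (leq_trans _ H2) // leq_add2l.
rewrite addnS; apply: Hmono; first by rewrite (leq_trans H1) // leq_addr.
by rewrite -addnS.
Qed.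

Lemma alpha_le (R : realFieldType) m (alpha : nat -> R)
  (Hmono : forall i : nat, (1 <= i)%N -> (i < m)%N -> alpha i.+1 <= alpha i) i j :
  (1 <= i)%N -> (i <= j)%N -> (j <= m)%N -> alpha j <= alpha i.
Proof.
move=> H1 H2 H3; rewrite -(subnKC H2). apply: (@alpha_mono _ _ _ Hmono) => //.
by rewrite subnKC.
Qed.

Lemma sum_add1 (R : realFieldType) (alpha : nat -> R) l :
  \sum_(1 <= i < l.+1) alpha i = \sum_(i < l) alpha i.+1.
Proof. by rewrite big_add1 /= big_mkord. Qed.

Lemma alpha_ge0 (R : realFieldType) m (alpha : nat -> R)
  (Hmono : forall i : nat, (1 <= i)%N -> (i < m)%N -> alpha i.+1 <= alpha i)
  (Hlast : alpha m = 0) j : (1 <= j)%N -> (j <= m)%N -> 0 <= alpha j.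
Proof. by move=> H1 H2; rewrite -Hlast; apply: (@alpha_le _ _ _ Hmono). Qed.

Lemma Tsc_le_score (R : realFieldType) n m l (alpha : nat -> R)
  (Hmono : forall i : nat, (1 <= i)%N -> (i < m)%N -> alpha i.+1 <= alpha i)
  (Hlast : alpha m = 0) (Hlm : (l < m)%N) (E : 'I_n -> {perm 'I_m}) (c : 'I_m) :
  Tsc alpha l E c <= score alpha E c /\ score alpha E c <= best alpha l E c.
Proof.
set B := \sum_(v | ~~ (pos E v c <= l)%N) alpha (pos E v c).
have HB : \sum_(v | ~~ (pos E v c <= l)%N) alpha (pos E v c) = B by [].
have -> : score alpha E c = Tsc alpha l E c + B.
  by rewrite /score /Tsc (bigID (fun v => (pos E v c <= l)%N)).
rewrite /best.
have hp v : (1 <= pos E v c)%N && (pos E v c <= m)%N by rewrite /pos ltn_ord.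
have B0 : 0 <= B.
  rewrite -HB; apply: sumr_ge0 => v _; have /andP[h1 h2] := hp v.
  exact: (@alpha_ge0 _ _ _ Hmono Hlast).
split; first by rewrite lerDl.
rewrite lerD2l.
have -> : (n - occ l E c)%N = #|[set v | ~~ (pos E v c <= l)%N]|.
  rewrite /occ; have H := cardsC [set v | (pos E v c <= l)%N]; rewrite card_ord in H; rewrite -[X in (X - _)%N]H addKn.
  by apply: eq_card => v; rewrite !inE.
rewrite -HB mulr_natl -sumr_const.
rewrite [in X in _ <= X](eq_bigl (fun v => ~~ (pos E v c <= l)%N)); last by move=> v; rewrite inE.
apply: ler_sum => v; rewrite -ltnNge => hv.
have /andP[h1 h2] := hp v.
by apply: (@alpha_le _ _ _ Hmono).
Qed.

Lemma Tsc_occ (R : realFieldType) n m l (alpha : nat -> R)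
  (Hmono : forall i : nat, (1 <= i)%N -> (i < m)%N -> alpha i.+1 <= alpha i)
  (Hlast : alpha m = 0) (E : 'I_n -> {perm 'I_m}) (c : 'I_m) :
  0 <= Tsc alpha l E c /\ Tsc alpha l E c <= (occ l E c)%:R * alpha 1%N.
Proof.
have hp v : (1 <= pos E v c)%N && (pos E v c <= m)%N by rewrite /pos ltn_ord.
split.
  apply: sumr_ge0 => v _; have /andP[h1 h2] := hp v.
  exact: (@alpha_ge0 _ _ _ Hmono Hlast).
rewrite /Tsc /occ mulr_natl -sumr_const.
rewrite [in X in _ <= X](eq_bigl (fun v => (pos E v c <= l)%N)); last by move=> v; rewrite inE.
apply: ler_sum => v _; have /andP[h1 h2] := hp v.
by apply: (@alpha_le _ _ _ Hmono).
Qed.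

Lemma sum_Tsc (R : realFieldType) n m l (alpha : nat -> R) (Hlm : (l < m)%N)
  (E : 'I_n -> {perm 'I_m}) :
  \sum_(c : 'I_m) Tsc alpha l E c = n%:R * \sum_(1 <= i < l.+1) alpha i.
Proof.
rewrite /Tsc.
under eq_bigr do rewrite big_mkcond.
rewrite exchange_big /=.
have -> : n%:R * \sum_(1 <= i < l.+1) alpha i = \sum_(v < n) \sum_(1 <= i < l.+1) alpha i.
  by rewrite sumr_const card_ord mulr_natl.
apply: eq_bigr => v _.
rewrite (reindex_inj (@perm_inj _ (E v)^-1)) /=.
rewrite /pos.
under eq_bigr do rewrite permKV.
rewrite -big_mkcond /= sum_add1 (big_ord_widen m (fun i => alpha i.+1)) //.
exact: ltnW.
Qed.

Lemma div_mono (R : realFieldType) (x y z w : R) :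
  0 <= x -> x <= y -> 0 < z -> z <= w -> 0 < w -> x / w <= y / z.
Proof.
move=> h0 h1 h2 h3 h4; rewrite ler_pdivrMr // mulrAC ler_pdivlMr //.
nra.
Qed.

Theorem theorem4 (R : realFieldType) (n m l : nat) (alpha : nat -> R)
  (Hm : (2 <= m)%N) (Hl1 : (1 <= l)%N) (Hlm : (l < m)%N) (Hn : (0 < n)%N)
  (Hmono : forall i : nat, (1 <= i)%N -> (i < m)%N -> alpha i.+1 <= alpha i)
  (Hlast : alpha m = 0) (Hpos : 0 < alpha 1%N)
  (E : 'I_n -> {perm 'I_m}) (w : 'I_m) :
  alg_output alpha l E w ->
  approx_ratio m alpha l <= score alpha E w / max_score alpha E.
Proof.
move=> [a [b1 [b2 [Ha [Hb1 [Hb2ne [Hb2 ->]]]]]]].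
have worstE c : worst alpha l E c = Tsc alpha l E c.
  by rewrite /worst Hlast mulr0 addr0.
have {}Ha c : Tsc alpha l E c <= Tsc alpha l E a by rewrite -!worstE.
set T := Tsc alpha l E; set B := best alpha l E; set sc := score alpha E.
set S := \sum_(1 <= i < l.+1) alpha i.
set b := alpha l.+1; set a1 := alpha 1%N.
have hTs c : T c <= sc c /\ sc c <= B c by apply: (@Tsc_le_score _ _ _ _ _ Hmono).
have hocc c : 0 <= T c /\ T c <= (occ l E c)%:R * a1 := @Tsc_occ _ _ _ l _ Hmono Hlast E c.
have b0 : 0 <= b by apply: (@alpha_ge0 _ _ _ Hmono Hlast).
have ba1 : b <= a1 by apply: (@alpha_le _ _ _ Hmono).
have S0 : 0 < S.
  have [l' hl'] : exists l', l = l'.+1 by exists l.-1; rewrite prednK.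
  have Hlm' := Hlm; rewrite hl' in Hlm'.
  rewrite /S sum_add1 hl' big_ord_recl /=.
  apply: (lt_le_trans Hpos); rewrite lerDl; apply: sumr_ge0 => i _.
  apply: (@alpha_ge0 _ _ _ Hmono Hlast) => //.
  rewrite /bump /= add1n; have := ltn_ord i; lia.
have hB c : a1 * B c <= (a1 - b) * T c + n%:R * b * a1.
  have hon : (occ l E c <= n)%N.
    by rewrite /occ -[X in (_ <= X)%N](card_ord n) max_card.
  rewrite /B /best natrB //.
  have [h1 h2] := hocc c.
  have h3 : 0 <= ((occ l E c)%:R * a1 - T c) * b by apply: mulr_ge0; lra.
  rewrite -/T -/b; nra.
have hx : n%:R * S <= m%:R * T a.
  rewrite -(@sum_Tsc _ _ _ l alpha Hlm E).
  have -> : m%:R * T a = \sum_(c : 'I_m) T a by rewrite sumr_const card_ord mulr_natl.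
  by apply: ler_sum => c _; apply: Ha.
have n0 : 0 < n%:R :> R by rewrite ltr0n.
have m0 : 0 < m%:R :> R by rewrite ltr0n (leq_trans _ Hm).
have x0 : 0 < T a.
  have : 0 < n%:R * S by apply: mulr_gt0.
  move=> h; nra.
have hBb c : T c <= B c by have [h1 h2] := hTs c; apply: le_trans h2.
have B1pos : 0 < B b1 by apply: (lt_le_trans x0); apply: le_trans (hBb a) (Hb1 a).
have key : approx_ratio m alpha l <= T a / B b1.
  rewrite /approx_ratio -/S -/b -/a1.
  set D := _ + _.
  have hD : a1 * D = m%:R * b * a1 + (a1 - b) * S by rewrite /D; field; exact: lt0r_neq0.
  case: (lerP D 0) => hD0.
    apply: (@le_trans _ _ 0); last by apply: divr_ge0; lra.
    by rewrite pmulr_rle0 ?invr_le0 //; lra.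
  rewrite ler_pdivrMr // mulrAC ler_pdivlMr //.
  rewrite -(@ler_pM2l _ a1) // (mulrCA a1 (T a)) hD.
  have h1 := hB b1.
  have h2 : T b1 <= T a by apply: Ha.
  have h3 : a1 * B b1 <= (a1 - b) * T a + n%:R * b * a1.
    apply: le_trans h1 _; rewrite lerD2r; apply: ler_wpM2l => //; lra.
  have h4 : 0 <= b * a1 by apply: mulr_ge0; lra.
  nra.
have x1 : T a / B b1 <= 1.
  rewrite ler_pdivrMr // mul1r; apply: le_trans (hBb a) (Hb1 a).
set M := max_score alpha E.
have hM c : sc c <= M by apply: bigmax_seq_ge; rewrite mem_index_enum.
have [cs Mcs] : exists cs, M = sc cs.
  case: (@bigmax_seq_att _ _ sc (index_enum 'I_m)) => [h|[cs _ h]]; last by exists cs.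
  have : T a <= M by apply: le_trans (hM a); have [] := hTs a.
  rewrite /M /max_score h; lra.
have M0 : 0 < M by apply: (lt_le_trans x0); apply: le_trans (hM a); have [] := hTs a.
case: ifP => Hif.
  apply: le_trans key _; apply: div_mono => //; first by lra.
  - by have [] := hTs a.
  - rewrite Mcs; have [_ h] := hTs cs; apply: le_trans h (Hb1 cs).
have Hlt : T a / B b1 < T b1 / B b2.
  by rewrite ltNge; apply/negP => h; move: Hif; rewrite !worstE h.
have [/eqP csb|csb] := boolP (cs == b1).
  rewrite Mcs csb divff; first by apply: le_trans key x1.
  by rewrite -csb -Mcs lt0r_neq0.
have B2pos : 0 < B b2.
  rewrite lt_def (le_trans _ (hBb b2)) ?andbT; last by have [] := hocc b2.
  apply/eqP => h; move: Hlt; rewrite h invr0 mulr0 ltNge divr_ge0 //; lra.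
apply: le_trans key _; apply: (le_trans (ltW Hlt)); apply: div_mono => //.
- by have [] := hocc b1.
- by have [] := hTs b1.
- rewrite Mcs; have [_ h] := hTs cs; apply: le_trans h (Hb2 cs csb).
Qed.
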